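(* Let $0<q<\infty$ and $\frac{q}{q+1}<p<\infty$, and let $r=\frac{pq}{pq+p-q}$ (equivalently $\frac1p+\frac1r=1+\frac1q$). Then $$\left(\frac{\sin_{p,q}x}{x}\right)^p+\left(\frac{\operatorname{tam}_{p,q}x}{x}\right)^r>2 \quad \text{for all } x\in\left(0,\tfrac{\pi_{p,q}}{2}\right),$$ and $$\left(\frac{\sinh_{p,q}x}{x}\right)^p+\left(\frac{\operatorname{tamh}_{p,q}x}{x}\right)^r>2 \quad \text{for all } x\in\left(0,\tfrac{\pi_{r,q}}{2}\right).$$
   Context: For $0<q<\infty$ and $\frac{q}{q+1}<p<\infty$: let $F_{p,q}(y)=\int_0^y (1-t^q)^{-1/p}\,dt$ for $y\in[0,1)$ and $\pi_{p,q}=2\int_0^1(1-t^q)^{-1/p}\,dt\in(0,\infty]$ (it equals $\infty$ when $p\le 1$). The function $\sin_{p,q}:[0,\pi_{p,q}/2)\to[0,1)$ is the inverse of $F_{p,q}$, $\cos_{p,q}x=\frac{d}{dx}\sin_{p,q}x$, and $\operatorname{tam}_{p,q}x=\sin_{p,q}x/\cos_{p,q}^{p/q}x$. Let $G_{p,q}(y)=\int_0^y(1+t^q)^{-1/p}\,dt$ for $y\in[0,\infty)$; its range is $[0,\pi_{r,q}/2)$ with $r=\frac{pq}{pq+p-q}$ (which also satisfies $\frac{q}{q+1}<r<\infty$). The function $\sinh_{p,q}:[0,\pi_{r,q}/2)\to[0,\infty)$ is the inverse of $G_{p,q}$, $\cosh_{p,q}x=\frac{d}{dx}\sinh_{p,q}x$,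 and $\operatorname{tamh}_{p,q}x=\sinh_{p,q}x/\cosh_{p,q}^{p/q}x$. *)

(* Defs.v *)
From Stdlib Require Import Reals Lra ClassicalEpsilon.
From Coquelicot Require Import Coquelicot.
Open Scope R_scope.

(* real power x^a for x >= 0, with the convention 0^a = 0 (a > 0 in use) *)
Definition rpow (x a : R) : R := if Rlt_dec 0 x then Rpower x a else 0.

Definition F_pq (p q y : R) : R :=
  RInt (fun t => Rpower (1 - rpow t q) (- / p)) 0 y.

Definition G_pq (p q y : R) : R :=
  RInt (fun t => Rpower (1 + rpow t q) (- / p)) 0 y.

(* pi_{p,q} = 2 * int_0^1 (1-t^q)^(-1/p) dt in (0, +oo]; the improper integral
   of the positive integrand is the supremum of F_{p,q} over [0,1). *)
Definition pi_pq (p q : R) : Rbar :=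
  Rbar_mult 2 (Lub_Rbar (fun z => exists y, 0 <= y < 1 /\ z = F_pq p q y)).

Definition sin_pq (p q x : R) : R :=
  epsilon (inhabits 0) (fun y => 0 <= y < 1 /\ F_pq p q y = x).
Definition cos_pq (p q x : R) : R := Derive (sin_pq p q) x.
Definition tam_pq (p q x : R) : R := sin_pq p q x / Rpower (cos_pq p q x) (p / q).

Definition sinh_pq (p q x : R) : R :=
  epsilon (inhabits 0) (fun y => 0 <= y /\ G_pq p q y = x).
Definition cosh_pq (p q x : R) : R := Derive (sinh_pq p q) x.
Definition tamh_pq (p q x : R) : R := sinh_pq p q x / Rpower (cosh_pq p q x) (p / q).

(* Main.v *)
Require Import Defs.
From Stdlib Require Import Reals.
From Coquelicot Require Import Coquelicot.
From Stdlib Require Import Lra Ranalysis5 ClassicalEpsilon Classical.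
Open Scope R_scope.

Lemma rpow_pos t q : 0 < t -> rpow t q = Rpower t q.
Proof. intros H; unfold rpow; destruct (Rlt_dec 0 t); lra. Qed.

Lemma rpow_nonpos t q : t <= 0 -> rpow t q = 0.
Proof. intros H; unfold rpow; destruct (Rlt_dec 0 t); lra. Qed.

Lemma Rpower_pos x e : 0 < Rpower x e.
Proof. unfold Rpower; apply exp_pos. Qed.

Lemma rpow_ge0 t q : 0 <= rpow t q.
Proof. unfold rpow; destruct (Rlt_dec 0 t). left; apply Rpower_pos. lra. Qed.

Lemma Rpower_cont_pt x e : 0 < x -> continuity_pt (fun x => Rpower x e) x.
Proof.
  intros H. apply derivable_continuous_pt.
  exists (e * Rpower x (e - 1)). apply derivable_pt_lim_power; auto.
Qed.

Lemma rpow_cont q t : 0 < q -> continuity_pt (fun t => rpow t q) t.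
Proof.
  intros Hq.
  destruct (Rtotal_order t 0) as [Ht|[Ht|Ht]].
  - apply continuity_pt_filterlim.
    change (continuous (fun t => rpow t q) t).
    apply (continuous_ext_loc (fun t => rpow t q) (fun _ : R => 0) t).
    exists (mkposreal (-t) ltac:(lra)). intros y Hy.
    change (Rabs (y - t) < - t) in Hy. apply Rabs_lt_between' in Hy.
    rewrite rpow_nonpos; auto; lra.
    apply continuous_const.
  - subst t. intros eps Heps. simpl in *.
    exists (Rpower eps (/ q)). split. apply Rpower_pos.
    intros x [_ Hx]. unfold R_dist in *. rewrite (rpow_nonpos 0) by lra.
    rewrite Rminus_0_r in *.
    destruct (Rle_dec x 0). rewrite rpow_nonpos; auto. rewrite Rabs_R0; auto.
    rewrite rpow_pos by lra. rewrite Rabs_pos_eq by (left; apply Rpower_pos).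
    rewrite Rabs_pos_eq in Hx by lra.
    replace eps with (Rpower (Rpower eps (/ q)) q).
    apply Rlt_Rpower_l; auto; lra.
    rewrite Rpower_mult. rewrite Rinv_l by lra. apply Rpower_1; auto.
  - apply continuity_pt_filterlim.
    change (continuous (fun t => rpow t q) t).
    apply (continuous_ext_loc (fun t => rpow t q) (fun t => Rpower t q) t).
    exists (mkposreal t Ht). intros y Hy.
    change (Rabs (y - t) < t) in Hy. apply Rabs_lt_between' in Hy.
    rewrite rpow_pos; auto; lra.
    apply (proj1 (continuity_pt_filterlim _ _)). apply Rpower_cont_pt; auto.
Qed.

Definition kk (s e q t : R) : R := Rpower (1 + s * rpow t q) e.
Definition Fg (s e q y : R) : R := RInt (kk s e q) 0 y.

Lemma kk_pos s e q t : 0 < kk s e q t.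
Proof. apply Rpower_pos. Qed.

Lemma kk_cont s e q t : 0 < q -> 0 < 1 + s * rpow t q -> continuity_pt (kk s e q) t.
Proof.
  intros Hq Hw.
  change (continuity_pt (comp (fun x => Rpower x e)
     (plus_fct (fct_cte 1) (mult_fct (fct_cte s) (fun t => rpow t q)))) t).
  apply continuity_pt_comp.
  apply continuity_pt_plus. apply continuity_pt_const. intros a b; reflexivity.
  apply continuity_pt_mult. apply continuity_pt_const. intros a b; reflexivity.
  apply rpow_cont; auto.
  apply Rpower_cont_pt. exact Hw.
Qed.


Lemma Fg_ex (s e q M : R) (Hq : 0 < q) (HM : 0 < M) (Hdom : forall t, t < M -> 0 < 1 + s * rpow t q) y : y < M -> ex_RInt (kk s e q) 0 y.
Proof.
  intros Hy. apply (ex_RInt_continuous (V:=R_CompleteNormedModule)). intros z Hz.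
  apply continuity_pt_filterlim. apply kk_cont; auto. apply Hdom.
  assert (Rmax 0 y < M) by (apply Rmax_lub_lt; lra). lra.
Qed.

Lemma Fg_derive (s e q M : R) (Hq : 0 < q) (HM : 0 < M) (Hdom : forall t, t < M -> 0 < 1 + s * rpow t q) y : y < M -> is_derive (Fg s e q) y (kk s e q y).
Proof.
  intros Hy. unfold Fg. apply (is_derive_RInt (V:=R_CompleteNormedModule) (kk s e q) (fun y => RInt (kk s e q) 0 y) 0 y).
  exists (mkposreal (M - y) ltac:(lra)). intros b Hb.
  change (Rabs (b - y) < M - y) in Hb. apply Rabs_lt_between' in Hb.
  apply RInt_correct. apply (Fg_ex s e q M Hq HM Hdom). lra.
  apply continuity_pt_filterlim. apply kk_cont; auto.
Qed.

Lemma Fg_cont (s e q M : R) (Hq : 0 < q) (HM : 0 < M) (Hdom : forall t, t < M -> 0 < 1 + s * rpow t q) y : y < M -> continuity_pt (Fg s e q) y.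
Proof.
  intros Hy. apply derivable_continuous_pt. apply ex_derive_Reals_0.
  eexists. apply (Fg_derive s e q M Hq HM Hdom); auto.
Qed.

Lemma Fg_incr (s e q M : R) (Hq : 0 < q) (HM : 0 < M) (Hdom : forall t, t < M -> 0 < 1 + s * rpow t q) u v : u < v -> v < M -> Fg s e q u < Fg s e q v.
Proof.
  intros Huv Hv.
  destruct (MVT_cor2 (Fg s e q) (kk s e q) u v Huv) as [c [Hc1 Hc2]].
  intros c Hc. apply is_derive_Reals. apply (Fg_derive s e q M Hq HM Hdom). lra.
  assert (0 < kk s e q c) by apply kk_pos. nra.
Qed.

Lemma Fg_0 (s e q : R) : Fg s e q 0 = 0.
Proof. unfold Fg. rewrite RInt_point. reflexivity. Qed.


Lemma inv_deriv (F g : R -> R) (D : R -> Prop) (lb y ub l : R) :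
  (forall u v, D u -> D v -> u < v -> F u < F v) ->
  lb < y < ub -> (forall t, lb <= t <= ub -> D t) ->
  (forall x, F lb <= x <= F ub -> D (g x) /\ F (g x) = x) ->
  (forall t, lb <= t <= ub -> ex_derive F t) ->
  is_derive F y l -> l <> 0 ->
  is_derive g (F y) (1 / l).
Proof.
  intros Hmono Hy HD Hg Hder Hl Hl0.
  assert (Hle : forall u v, D u -> D v -> u <= v -> F u <= F v).
  { intros u v Du Dv [H|H]. left; auto. subst; lra. }
  assert (Hinj : forall u v, D u -> D v -> F u = F v -> u = v).
  { intros u v Du Dv E. destruct (Rtotal_order u v) as [H|[H|H]]; auto.
    specialize (Hmono u v Du Dv H); lra. specialize (Hmono v u Dv Du H); lra. }
  assert (Flu : F lb < F y < F ub).
  { split; apply Hmono; try apply HD; lra. }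
  assert (Hgi : forall t, lb <= t <= ub -> g (F t) = t).
  { intros t Ht. assert (F lb <= F t <= F ub) by (split; apply Hle; try apply HD; lra).
    destruct (Hg (F t) H). apply Hinj; auto. }
  assert (glb := Hgi lb ltac:(lra)). assert (gub := Hgi ub ltac:(lra)).
  assert (gy := Hgi y ltac:(lra)).
  assert (Prf : forall a, g (F lb) <= a <= g (F ub) -> derivable_pt F a).
  { intros a Ha. rewrite glb, gub in Ha. apply ex_derive_Reals_0. apply Hder. lra. }
  assert (Prg_incr : g (F lb) <= g (F y) <= g (F ub)) by (rewrite glb, gub, gy; lra).
  assert (Hcont : continuity_pt g (F y)).
  { intros eps Heps. simpl.
    set (e' := Rmin eps (Rmin (y - lb) (ub - y)) / 2).
    assert (He1 : 0 < e').
    { unfold e'. apply Rdiv_lt_0_compat; [|lra].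
      apply Rmin_glb_lt; auto. apply Rmin_glb_lt; lra. }
    assert (He2 : e' <= eps / 2) by (unfold e'; generalize (Rmin_l eps (Rmin (y - lb) (ub - y))); lra).
    assert (He3 : e' < y - lb /\ e' < ub - y).
    { unfold e'. generalize (Rmin_r eps (Rmin (y - lb) (ub - y))) (Rmin_l (y - lb) (ub - y)) (Rmin_r (y - lb) (ub - y)). lra. }
    assert (F1 : F lb < F (y - e') < F y).
    { split; apply Hmono; try apply HD; lra. }
    assert (F2 : F y < F (y + e') < F ub).
    { split; apply Hmono; try apply HD; lra. }
    exists (Rmin (F y - F (y - e')) (F (y + e') - F y)). split.
    apply Rmin_glb_lt; lra.
    intros x [_ Hx]. unfold R_dist in *. rewrite gy.
    assert (Hx1 := Rmin_l (F y - F (y - e')) (F (y + e') - F y)).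
    assert (Hx2 := Rmin_r (F y - F (y - e')) (F (y + e') - F y)).
    apply Rabs_lt_between' in Hx.
    destruct (Hg x ltac:(lra)) as [Dg Fg].
    apply Rabs_lt_between'. split.
    - destruct (Rle_lt_dec (g x) (y - e')) as [H|H]; [|lra].
      assert (F (g x) <= F (y - e')) by (apply Hle; auto; apply HD; lra). lra.
    - destruct (Rle_lt_dec (y + e') (g x)) as [H|H]; [|lra].
      assert (F (y + e') <= F (g x)) by (apply Hle; auto; apply HD; lra). lra. }
  assert (E : derive_pt F (g (F y)) (Prf (g (F y)) Prg_incr) = l).
  { apply derive_pt_eq_0. rewrite gy. apply is_derive_Reals. auto. }
  assert (R := derivable_pt_lim_recip_interv F g (F lb) (F ub) (F y) Prf Hcont
    ltac:(lra) ltac:(lra) Prg_incr).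
  rewrite E in R. apply is_derive_Reals. apply R; auto.
  intros x Hx. unfold comp, id. apply Hg; auto.
Qed.

Lemma ln_lt_sub1 z : 0 < z -> z <> 1 -> ln z < z - 1.
Proof.
  intros H1 H2. assert (ln z <> 0).
  { intro E. apply H2. rewrite <- (exp_ln z) by auto. rewrite E. apply exp_0. }
  generalize (exp_ineq1 _ H). rewrite exp_ln; auto. lra.
Qed.

Lemma ln_le_sub1 z : 0 < z -> ln z <= z - 1.
Proof.
  intros H. destruct (Req_dec z 1). subst; rewrite ln_1; lra. left; apply ln_lt_sub1; auto.
Qed.

Lemma bernoulli u b : -1 < u -> u <> 0 -> 0 < b < 1 -> Rpower (1 + u) b < 1 + b * u.
Proof.
  intros Hu Hu0 Hb. set (w := 1 + u). set (m := 1 + b * u).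
  assert (Hw : 0 < w) by (unfold w; lra).
  assert (Hm : 0 < m) by (unfold m; assert (0 < b * (u + 1)) by (apply Rmult_lt_0_compat; lra); lra).
  assert (K : b * ln (w / m) + (1 - b) * ln (1 / m) < 0).
  { assert (Sum : b * (w / m - 1) + (1 - b) * (1 / m - 1) = 0).
    { unfold w, m. field. unfold m in Hm. lra. }
    assert (P1 : 0 < w / m) by (apply Rdiv_lt_0_compat; auto).
    assert (P2 : 0 < 1 / m) by (apply Rdiv_lt_0_compat; lra).
    destruct (Req_dec (w / m) 1) as [E|E].
    - assert (E2 : 1 / m <> 1).
      { intro E2. apply Hu0. assert (Em : m = 1).
        { replace m with (/ (1 / m)) by (field; lra). rewrite E2. apply Rinv_1. }
        assert (Ew : w = m). { replace w with ((w / m) * m) by (field; lra). rewrite E; ring. }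
        unfold w, m in *. nra. }
      generalize (ln_le_sub1 _ P1) (ln_lt_sub1 _ P2 E2). intros. nra.
    - generalize (ln_lt_sub1 _ P1 E) (ln_le_sub1 _ P2). intros. nra. }
  unfold Rdiv in K. rewrite ln_mult in K by (auto; apply Rinv_0_lt_compat; auto).
  rewrite Rmult_1_l, ln_Rinv in K by auto.
  unfold Rpower. rewrite <- (exp_ln m) by auto. apply exp_increasing. lra.
Qed.

Lemma final_ineq p q r x y w :
  0 < q -> q / (q + 1) < p -> r = p * q / (p * q + p - q) ->
  0 < x -> 0 < y -> 0 < w ->
  x < y * Rpower w (- (1 / (p * (q + 1)))) ->
  Rpower (y / x) p + Rpower (y / Rpower w (/ q) / x) r > 2.
Proof.
  intros Hq Hp Hr Hx Hy Hw Hxy.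
  assert (Hp0 : 0 < p).
  { apply Rlt_trans with (q / (q+1)); auto. apply Rdiv_lt_0_compat; lra. }
  assert (HD : 0 < p * q + p - q).
  { apply (Rmult_lt_compat_r (q + 1)) in Hp; [|lra].
    unfold Rdiv in Hp. rewrite Rmult_assoc, Rinv_l, Rmult_1_r in Hp by lra. nra. }
  set (a := 1 / (p * (q + 1))) in *.
  assert (Ha : (p + r) * a = r / q).
  { rewrite Hr. unfold a. field. repeat split; lra. }
  assert (Hr0 : 0 < r).
  { rewrite Hr. apply Rdiv_lt_0_compat; auto. nra. }
  assert (Lx : ln x < ln y - a * ln w).
  { unfold Rpower in Hxy. rewrite <- (exp_ln y) in Hxy at 1 by auto.
    rewrite <- exp_plus in Hxy. rewrite <- (exp_ln x) in Hxy by auto.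
    apply exp_lt_inv in Hxy. lra. }
  set (A := Rpower (y / x) p). set (B := Rpower (y / Rpower w (/ q) / x) r).
  assert (HA : 0 < A) by apply Rpower_pos.
  assert (HB : 0 < B) by apply Rpower_pos.
  assert (HAB : 1 < A * B).
  { unfold A, B, Rpower. rewrite <- exp_plus. rewrite <- exp_0. apply exp_increasing.
    assert (Pw : 0 < Rpower w (/ q)) by apply Rpower_pos.
    unfold Rdiv. rewrite !ln_mult by (auto; try apply Rinv_0_lt_compat; auto;
      apply Rmult_lt_0_compat; auto; apply Rinv_0_lt_compat; auto).
    rewrite !ln_Rinv by auto. rewrite ln_exp.
    assert (Z : p * (ln y + - ln x) + r * (ln y + - (/ q * ln w) + - ln x)
               = (p + r) * (ln y - ln x) - r / q * ln w) by (field; lra).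
    rewrite Z, <- Ha.
    assert (0 < p + r) by lra.
    assert (ln y - ln x > a * ln w) by lra. nra. }
  assert (S4 : (A + B) * (A + B) > 4).
  { assert (T: (A+B)*(A+B) = (A-B)*(A-B) + 4*(A*B)) by ring.
    assert (0 <= (A-B)*(A-B)) by apply Rle_0_sqr. rewrite T. clearbody A B. lra. }
  destruct (Rle_lt_dec (A + B) 2); [nra | lra].
Qed.

Lemma strict_open (f df : R -> R) u v : u < v ->
  (forall c, u <= c <= v -> continuity_pt f c) ->
  (forall c, u < c < v -> is_derive f c (df c)) ->
  (forall c, u < c < v -> 0 < df c) -> f u < f v.
Proof.
  intros Huv Hc Hd Hp.
  assert (pr1 : forall c, u < c < v -> derivable_pt f c).
  { intros c Hc'. apply ex_derive_Reals_0. eexists; apply Hd; auto. }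
  assert (pr2 : forall c, u < c < v -> derivable_pt id c).
  { intros c _. apply derivable_pt_id. }
  destruct (MVT f id u v pr1 pr2 Huv Hc) as [c [P E]].
  intros c Hc'. apply derivable_continuous_pt, derivable_pt_id.
  rewrite (derive_pt_eq_0 f c (df c) (pr1 c P)) in E by (apply is_derive_Reals; apply Hd; auto).
  rewrite (derive_pt_eq_0 id c 1 (pr2 c P)) in E by apply derivable_pt_lim_id.
  unfold id in E. specialize (Hp c P). nra.
Qed.

Lemma locally_pos (f g : R -> R) t : 0 < t -> (forall u, 0 < u -> f u = g u) ->
  locally t (fun u => f u = g u).
Proof.
  intros Ht H. exists (mkposreal t Ht). intros u Hu.
  change (Rabs (u - t) < t) in Hu. apply Rabs_lt_between' in Hu. apply H; lra.
Qed.

Lemma HF s p q M y : 0 < q -> q / (q + 1) < p -> 0 < M ->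
  (forall t, t < M -> 0 < 1 + s * rpow t q) -> s <> 0 -> 0 < y < M ->
  Fg s (- / p) q y < y * kk s (- (1 / (p * (q + 1)))) q y.
Proof.
  intros Hq Hp HM Hdom Hs Hy.
  assert (Hp0 : 0 < p).
  { apply Rlt_trans with (q / (q+1)); auto. apply Rdiv_lt_0_compat; lra. }
  set (a := 1 / (p * (q + 1))).
  set (b := 1 - a * q).
  assert (Hpq : q < p * (q + 1)).
  { apply (Rmult_lt_compat_r (q + 1)) in Hp; [|lra].
    unfold Rdiv in Hp. rewrite Rmult_assoc, Rinv_l, Rmult_1_r in Hp by lra. lra. }
  assert (Hpq0 : 0 < p * (q + 1)) by nra.
  assert (Haq : a * q = q / (p * (q + 1))) by (unfold a; field; lra).
  assert (Hb : 0 < b < 1).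
  { unfold b. rewrite Haq. split.
    - assert (q / (p * (q + 1)) < 1); [|lra].
      unfold Rdiv. apply Rmult_lt_reg_r with (p * (q + 1)); auto.
      rewrite Rmult_assoc, Rinv_l by lra. lra.
    - assert (0 < q / (p * (q + 1))); [|lra].
      apply Rdiv_lt_0_compat; auto. }
  set (phi := fun t => t * kk s (- a) q t - Fg s (- / p) q t).
  assert (H0 : phi 0 = 0).
  { unfold phi. rewrite (Fg_0 s (-/p) q). ring. }
  cut (phi 0 < phi y). { intros Hc. rewrite H0 in Hc. unfold phi in Hc. lra. }
  apply (strict_open phi (fun c => exp (- a * ln (1 + s * Rpower c q)) *
      (1 - a * q * s * Rpower c q / (1 + s * Rpower c q)) - kk s (- / p) q c)).
  - lra.
  - intros c Hc. unfold phi.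
    change (continuity_pt (minus_fct (mult_fct id (kk s (- a) q)) (Fg s (- / p) q)) c).
    apply continuity_pt_minus. apply continuity_pt_mult.
    apply derivable_continuous_pt, derivable_pt_id.
    apply kk_cont; auto. apply Hdom; lra.
    apply (Fg_cont s (-/p) q M); auto. lra.
  - intros c Hc. unfold phi.
    assert (Hw : 0 < 1 + s * Rpower c q).
    { rewrite <- rpow_pos by lra. apply Hdom; lra. }
    apply (is_derive_minus (fun t => t * kk s (- a) q t) (Fg s (- / p) q)).
    + apply (is_derive_ext_loc (fun t => t * Rpower (1 + s * Rpower t q) (- a))).
      apply locally_pos; [lra|]. intros u Hu. unfold kk. rewrite rpow_pos; auto.
      unfold Rpower. auto_derive.
      * repeat split; try lra. unfold Rpower in Hw. auto.
      * unfold Rpower. field. split; [|lra]. unfold Rpower in Hw. lra.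
    + apply (Fg_derive s (-/p) q M); auto. lra.
  - intros c Hc.
    assert (HS : 0 < Rpower c q) by apply Rpower_pos.
    set (S := Rpower c q) in *.
    assert (Hw : 0 < 1 + s * S).
    { unfold S. rewrite <- rpow_pos by lra. apply Hdom; lra. }
    set (w := 1 + s * S) in *.
    unfold kk. rewrite rpow_pos by lra. fold S w.
    assert (Bn := bernoulli (s * S) b ltac:(unfold w in Hw; lra)
       ltac:(apply Rmult_integral_contrapositive; split; lra) Hb).
    fold w in Bn. unfold Rpower in *.
    set (L := ln w).
    assert (E : - / p * L = - a * L + b * L + - L).
    { unfold b, a. field. split; lra. }
    rewrite E, !exp_plus, exp_Ropp. unfold L. rewrite exp_ln by auto.
    set (E1 := exp (- a * ln w)). set (E2 := exp (b * ln w)) in *.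
    assert (HE1 : 0 < E1) by apply exp_pos.
    replace (E1 * (1 - a * q * s * S / w) - E1 * E2 * / w)
      with (E1 / w * ((1 + b * (s * S)) - E2)).
    apply Rmult_lt_0_compat. apply Rdiv_lt_0_compat; auto. lra.
    unfold w, b. field. unfold w in Hw. lra.
Qed.

Lemma lub_ex (F : R -> R) x : F 0 = 0 ->
  Rbar_lt (Finite (2 * x)) (Rbar_mult 2 (Lub_Rbar (fun z => exists y, 0 <= y < 1 /\ z = F y))) ->
  exists y1, 0 <= y1 < 1 /\ x < F y1.
Proof.
  intros H0 Hlt.
  destruct (classic (exists y1, 0 <= y1 < 1 /\ x < F y1)) as [H|H]; auto.
  exfalso.
  destruct (Lub_Rbar_correct (fun z => exists y, 0 <= y < 1 /\ z = F y)) as [Hub Hl].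
  set (L := Lub_Rbar _) in *.
  assert (Hx : Rbar_le L x).
  { apply Hl. intros z [y [Hy Hz]]. subst z. simpl.
    destruct (Rle_lt_dec (F y) x); auto. exfalso; apply H; exists y; auto. }
  assert (H0L : Rbar_le 0 L).
  { apply Hub. exists 0. split; [lra|]. auto. }
  destruct L as [l| |]; simpl in *; try tauto. lra.
Qed.

Lemma exist_root s e q M x y1 : 0 < q -> 0 < M ->
  (forall t, t < M -> 0 < 1 + s * rpow t q) ->
  0 < x -> 0 <= y1 < M -> x < Fg s e q y1 ->
  exists y, 0 < y < y1 /\ Fg s e q y = x.
Proof.
  intros Hq HM Hdom Hx Hy1 Hxy.
  assert (F0 := Fg_0 s e q).
  assert (Hy1p : 0 < y1).
  { destruct (Req_dec y1 0). subst. lra. lra. }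
  destruct (IVT_interv (fun t => Fg s e q t - x) 0 y1) as [z [Hz Ez]].
  - intros a Ha. apply continuity_pt_minus. apply (Fg_cont s e q M); auto. lra.
    apply continuity_pt_const. intros u v; reflexivity.
  - lra.
  - lra.
  - lra.
  - exists z. split; [|lra]. split.
    destruct (Req_dec z 0). subst. lra. lra.
    destruct (Req_dec z y1). subst. lra. lra.
Qed.

Lemma dom_m1 q : 0 < q -> forall t, t < 1 -> 0 < 1 + -1 * rpow t q.
Proof.
  intros Hq t Ht. destruct (Rle_lt_dec t 0).
  rewrite rpow_nonpos; auto. lra.
  rewrite rpow_pos; auto.
  assert (Rpower t q < Rpower 1 q) by (apply Rlt_Rpower_l; auto; lra).
  unfold Rpower at 2 in H. rewrite ln_1, Rmult_0_r, exp_0 in H. lra.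
Qed.

Lemma dom_p1 q M : forall t, t < M -> 0 < 1 + 1 * rpow t q.
Proof. intros t _. generalize (rpow_ge0 t q). lra. Qed.

Lemma F_pq_Fg p q y : F_pq p q y = Fg (-1) (- / p) q y.
Proof.
  unfold F_pq, Fg. apply (RInt_ext (V:=R_CompleteNormedModule)).
  intros t _. unfold kk. f_equal. ring.
Qed.

Lemma G_pq_Fg p q y : G_pq p q y = Fg 1 (- / p) q y.
Proof.
  unfold G_pq, Fg. apply (RInt_ext (V:=R_CompleteNormedModule)).
  intros t _. unfold kk. f_equal. ring.
Qed.

Lemma sin_spec p q x : 0 < q -> 0 < x ->
  (exists y1, 0 <= y1 < 1 /\ x < F_pq p q y1) ->
  0 < sin_pq p q x < 1 /\ Fg (-1) (- / p) q (sin_pq p q x) = x.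
Proof.
  intros Hq Hx [y1 [Hy1 Hxy]]. rewrite F_pq_Fg in Hxy.
  destruct (exist_root (-1) (-/p) q 1 x y1 Hq ltac:(lra) (dom_m1 q Hq) Hx Hy1 Hxy)
    as [y [Hy Ey]].
  assert (Ex : exists y, 0 <= y < 1 /\ F_pq p q y = x)
    by (exists y; rewrite F_pq_Fg; split; [lra|auto]).
  assert (Sp := epsilon_spec (inhabits 0) (fun y => 0 <= y < 1 /\ F_pq p q y = x) Ex).
  fold (sin_pq p q x) in Sp. destruct Sp as [S1 S2]. rewrite F_pq_Fg in S2.
  split; auto. split; [|lra].
  destruct (Req_dec (sin_pq p q x) 0) as [E|E]; [|lra].
  rewrite E, Fg_0 in S2. lra.
Qed.

Lemma sinh_spec p q x : 0 < q -> 0 < x ->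
  (exists y1, 0 <= y1 /\ x < G_pq p q y1) ->
  0 < sinh_pq p q x /\ Fg 1 (- / p) q (sinh_pq p q x) = x.
Proof.
  intros Hq Hx [y1 [Hy1 Hxy]]. rewrite G_pq_Fg in Hxy.
  destruct (exist_root 1 (-/p) q (y1 + 1) x y1 Hq ltac:(lra) (dom_p1 q (y1 + 1)) Hx
    ltac:(lra) Hxy) as [y [Hy Ey]].
  assert (Ex : exists y, 0 <= y /\ G_pq p q y = x)
    by (exists y; rewrite G_pq_Fg; split; [lra|auto]).
  assert (Sp := epsilon_spec (inhabits 0) (fun y => 0 <= y /\ G_pq p q y = x) Ex).
  fold (sinh_pq p q x) in Sp. destruct Sp as [S1 S2]. rewrite G_pq_Fg in S2.
  split; auto.
  destruct (Req_dec (sinh_pq p q x) 0) as [E|E]; [|lra].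
  rewrite E, Fg_0 in S2. lra.
Qed.

Lemma subst_lemma p q r s0 : 0 < q -> 0 < p -> r <> 0 -> / r = 1 + / q - / p ->
  0 <= s0 < 1 ->
  Fg 1 (- / p) q (s0 * kk (-1) (- / q) q s0) = Fg (-1) (- / r) q s0.
Proof.
  intros Hq Hp Hr Hrr Hs0.
  set (phi := fun t => t * kk (-1) (- / q) q t).
  set (K := fun t => Fg 1 (- / p) q (phi t) - Fg (-1) (- / r) q t).
  cut (K s0 = K 0).
  { unfold K, phi. rewrite Rmult_0_l, !Fg_0. lra. }
  destruct (Req_dec s0 0) as [E|E]. subst; reflexivity.
  destruct (MVT_gen K 0 s0 (fun _ => 0)) as [c [_ Hc]].
  - rewrite Rmin_left, Rmax_right by lra. intros t Ht.
    set (S := Rpower t q). set (w := 1 + -1 * S).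
    assert (Hw : 0 < w).
    { unfold w, S. rewrite <- rpow_pos by lra. apply dom_m1; auto; lra. }
    set (dphi := exp (- / q * ln w) * (1 + S / w)).
    assert (Hphi : is_derive phi t dphi).
    { apply (is_derive_ext_loc (fun t => t * Rpower (1 + -1 * Rpower t q) (- / q))).
      apply locally_pos; [lra|]. intros u Hu. unfold phi, kk. rewrite rpow_pos; auto.
      unfold Rpower. auto_derive.
      * repeat split; try lra. unfold w, S, Rpower in Hw. auto.
      * unfold dphi, w, S, Rpower. field. split; [|lra]. unfold w, S, Rpower in Hw. lra. }
    assert (Hpt : 0 < phi t).
    { unfold phi. apply Rmult_lt_0_compat; [lra|apply kk_pos]. }
    assert (H1 := is_derive_comp (Fg 1 (- / p) q) phi t _ _
      (Fg_derive 1 (- / p) q (phi t + 1) Hq ltac:(lra) (dom_p1 q _) (phi t) ltac:(lra)) Hphi).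
    assert (H2 := Fg_derive (-1) (- / r) q 1 Hq ltac:(lra) (dom_m1 q Hq) t ltac:(lra)).
    assert (H3 := is_derive_minus _ _ t _ _ H1 H2).
    match type of H3 with is_derive _ _ ?l => assert (Z : l = 0) end.
    { change (dphi * kk 1 (- / p) q (phi t) - kk (-1) (- / r) q t = 0).
      assert (Ephi : phi t = t * Rpower w (- / q)).
      { unfold phi, kk. rewrite rpow_pos by lra. reflexivity. }
      assert (Ek1 : kk 1 (- / p) q (phi t) = exp (/ p * ln w)).
      { unfold kk. rewrite rpow_pos by auto. rewrite Ephi.
        rewrite <- Rpower_mult_distr by (try lra; apply Rpower_pos).
        rewrite Rpower_mult. replace (- / q * q) with (- (1)) by (field; lra).
        rewrite (Rpower_Ropp w 1), (Rpower_1 w) by auto. fold S.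
        replace (1 + 1 * (S * / w)) with (/ w) by (unfold w; field; unfold w in Hw; lra).
        unfold Rpower. rewrite ln_Rinv by auto. f_equal. ring. }
      assert (Ek2 : kk (-1) (- / r) q t = exp (- / r * ln w)).
      { unfold kk. rewrite rpow_pos by lra. reflexivity. }
      rewrite Ek1, Ek2. unfold dphi.
      replace (1 + S / w) with (exp (- ln w)).
      rewrite <- !exp_plus. rewrite Hrr. replace (- (1 + / q - / p) * ln w)
        with (- / q * ln w + - ln w + / p * ln w) by ring. lra.
      rewrite exp_Ropp, exp_ln by auto. unfold w; field. unfold w in Hw; lra. }
    rewrite Z in H3. unfold K. exact H3.
  - rewrite Rmin_left, Rmax_right by lra. intros t Ht.
    unfold K.
    change (continuity_pt (minus_fct (comp (Fg 1 (- / p) q) phi) (Fg (-1) (- / r) q)) t).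
    apply continuity_pt_minus.
    + apply continuity_pt_comp.
      * unfold phi. change (continuity_pt (mult_fct id (kk (-1) (- / q) q)) t).
        apply continuity_pt_mult. apply derivable_continuous_pt, derivable_pt_id.
        apply kk_cont; auto. apply dom_m1; auto; lra.
      * apply (Fg_cont 1 (- / p) q (phi t + 1)); auto.
        assert (0 <= phi t). { unfold phi. apply Rmult_le_pos; [lra|left; apply kk_pos]. }
        lra. apply dom_p1. lra.
    + apply (Fg_cont (-1) (- / r) q 1); auto. lra. apply dom_m1; auto. lra.
  - lra.
Qed.

Lemma tam_rewrite p q w : 0 < p -> 0 < q -> 0 < w ->
  Rpower (1 / Rpower w (- / p)) (p / q) = Rpower w (/ q).
Proof.
  intros Hp Hq Hw. rewrite Rpower_Ropp.
  assert (0 < Rpower w (/ p)) by apply Rpower_pos.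
  replace (1 / / Rpower w (/ p)) with (Rpower w (/ p)) by (field; lra).
  rewrite Rpower_mult. f_equal. field. lra.
Qed.

Theorem theorem3p1 (p q : R) (hq : 0 < q) (hp : q / (q + 1) < p) :
  let r := p * q / (p * q + p - q) in
  (forall x : R, 0 < x -> Rbar_lt (Finite (2 * x)) (pi_pq p q) ->
     Rpower (sin_pq p q x / x) p + Rpower (tam_pq p q x / x) r > 2) /\
  (forall x : R, 0 < x -> Rbar_lt (Finite (2 * x)) (pi_pq r q) ->
     Rpower (sinh_pq p q x / x) p + Rpower (tamh_pq p q x / x) r > 2).
Proof.
  intros r.
  assert (Hp0 : 0 < p).
  { apply Rlt_trans with (q / (q+1)); auto. apply Rdiv_lt_0_compat; lra. }
  assert (HD : 0 < p * q + p - q).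
  { apply (Rmult_lt_compat_r (q + 1)) in hp; [|lra].
    unfold Rdiv in hp. rewrite Rmult_assoc, Rinv_l, Rmult_1_r in hp by lra. nra. }
  split.
  - intros x Hx Hlt. unfold pi_pq in Hlt.
    assert (F0 : F_pq p q 0 = 0) by (rewrite F_pq_Fg; apply Fg_0).
    destruct (lub_ex (F_pq p q) x F0 Hlt) as [y1 Hy1].
    destruct (sin_spec p q x hq Hx (ex_intro _ y1 Hy1)) as [Hy Ey].
    set (y := sin_pq p q x) in *.
    assert (Hd : is_derive (sin_pq p q) (Fg (-1) (- / p) q y) (1 / kk (-1) (- / p) q y)).
    { apply (inv_deriv (Fg (-1) (- / p) q) (sin_pq p q) (fun t => 0 <= t < 1) (y / 2) y ((y + 1) / 2)).
      - intros u v Du Dv Huv. apply (Fg_incr (-1) (- / p) q 1); auto; try lra. apply dom_m1; auto.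
      - lra.
      - intros t Ht. lra.
      - intros x' Hx'.
        assert (Fg (-1) (- / p) q 0 < Fg (-1) (- / p) q (y / 2)).
        { apply (Fg_incr (-1) (- / p) q 1); auto; try lra. apply dom_m1; auto. }
        assert (Fg (-1) (- / p) q ((y + 1) / 2) < Fg (-1) (- / p) q (((y + 1) / 2 + 1) / 2)).
        { apply (Fg_incr (-1) (- / p) q 1); auto; try lra. apply dom_m1; auto. }
        rewrite Fg_0 in *.
        destruct (sin_spec p q x' hq ltac:(lra)) as [S1 S2].
        { exists (((y + 1) / 2 + 1) / 2). rewrite F_pq_Fg. split; lra. }
        split; auto. lra.
      - intros t Ht. eexists. apply (Fg_derive (-1) (- / p) q 1); auto; try lra. apply dom_m1; auto.
      - apply (Fg_derive (-1) (- / p) q 1); auto; try lra. apply dom_m1; auto.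
      - generalize (kk_pos (-1) (- / p) q y). lra. }
    rewrite Ey in Hd.
    assert (Hcos : cos_pq p q x = 1 / kk (-1) (- / p) q y).
    { unfold cos_pq. apply is_derive_unique. exact Hd. }
    unfold tam_pq. rewrite Hcos. fold y.
    assert (Hw : 0 < 1 + -1 * Rpower y q).
    { rewrite <- rpow_pos by lra. apply dom_m1; auto. lra. }
    unfold kk. rewrite rpow_pos by lra.
    rewrite tam_rewrite by auto.
    apply final_ineq with (q := q); [auto|auto|reflexivity|auto|lra|auto|].
    assert (H := HF (-1) p q 1 y hq hp ltac:(lra) (dom_m1 q hq) ltac:(lra) ltac:(lra)).
    rewrite Ey in H. unfold kk in H. rewrite rpow_pos in H by lra. exact H.
  - intros x Hx Hlt. unfold pi_pq in Hlt.
    assert (Hr0 : 0 < r) by (unfold r; apply Rdiv_lt_0_compat; auto; nra).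
    assert (Hrr : / r = 1 + / q - / p) by (unfold r; field; repeat split; lra).
    assert (F0 : F_pq r q 0 = 0) by (rewrite F_pq_Fg; apply Fg_0).
    destruct (lub_ex (F_pq r q) x F0 Hlt) as [y1 Hy1].
    assert (Ex : exists y2, 0 <= y2 /\ x < G_pq p q y2).
    { exists (y1 * kk (-1) (- / q) q y1). split.
      apply Rmult_le_pos; [lra|left; apply kk_pos].
      rewrite G_pq_Fg, subst_lemma with (r := r); auto; try lra.
      rewrite <- F_pq_Fg. lra. }
    destruct (sinh_spec p q x hq Hx Ex) as [Hy Ey].
    set (y := sinh_pq p q x) in *.
    assert (Hd : is_derive (sinh_pq p q) (Fg 1 (- / p) q y) (1 / kk 1 (- / p) q y)).
    { apply (inv_deriv (Fg 1 (- / p) q) (sinh_pq p q) (fun t => 0 <= t) (y / 2) y (y + 1)).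
      - intros u v Du Dv Huv. apply (Fg_incr 1 (- / p) q (v + 1)); auto; try lra. apply dom_p1.
      - lra.
      - intros t Ht. lra.
      - intros x' Hx'.
        assert (Fg 1 (- / p) q 0 < Fg 1 (- / p) q (y / 2)).
        { apply (Fg_incr 1 (- / p) q (y + 3)); auto; try lra. apply dom_p1. }
        assert (Fg 1 (- / p) q (y + 1) < Fg 1 (- / p) q (y + 2)).
        { apply (Fg_incr 1 (- / p) q (y + 3)); auto; try lra. apply dom_p1. }
        rewrite Fg_0 in *.
        destruct (sinh_spec p q x' hq ltac:(lra)) as [S1 S2].
        { exists (y + 2). rewrite G_pq_Fg. split; lra. }
        split; auto. lra.
      - intros t Ht. eexists. apply (Fg_derive 1 (- / p) q (t + 1)); auto; try lra. apply dom_p1.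
      - apply (Fg_derive 1 (- / p) q (y + 1)); auto; try lra. apply dom_p1.
      - generalize (kk_pos 1 (- / p) q y). lra. }
    rewrite Ey in Hd.
    assert (Hcos : cosh_pq p q x = 1 / kk 1 (- / p) q y).
    { unfold cosh_pq. apply is_derive_unique. exact Hd. }
    unfold tamh_pq. rewrite Hcos. fold y.
    assert (Hw : 0 < 1 + 1 * Rpower y q).
    { generalize (Rpower_pos y q). lra. }
    unfold kk. rewrite rpow_pos by lra.
    rewrite tam_rewrite by auto.
    apply final_ineq with (q := q); [auto|auto|reflexivity|auto|lra|auto|].
    assert (H := HF 1 p q (y + 1) y hq hp ltac:(lra) (dom_p1 q _) ltac:(lra) ltac:(lra)).
    rewrite Ey in H. unfold kk in H. rewrite rpow_pos in H by lra. exact H.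
Qed.
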